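(* Let $r\ge 2$ and $m$ be integers with $0\le 2m\le r$, $n=2r-4m$, and let $f:S^2(S^r(\mathbb{C}^2))\to S^{n}(\mathbb{C}^2)$ be an $\mathfrak{sl}_2(\mathbb{C})$-equivariant linear map, written $f=\sum_{k=0}^n q_k w_k$. Let $\lambda=q_0(x_0x_{2m})$. Then for every $0\le k\le n/2$, every $0\le i\le r$, and $j=2m+k-i$, $$\binom{n}{k}q_k(x_ix_j)=\lambda\sum_{s=\max(0,i-k)}^{\min(2m,i)}(-1)^s\binom{2m}{s}\binom{r-s}{r-i}\binom{r-2m+s}{r-j},$$ where binomial coefficients $\binom{a}{b}$ that do not make sense (e.g. $b<0$, $a<0$ or $b>a$) are taken to be $0$, and $x_l=0$ for $l\notin[0,r]$.
   Context: $\mathfrak{sl}_2(\mathbb{C})$ has basis $X=\begin{pmatrix}0&1\\0&0\end{pmatrix}$, $H=\begin{pmatrix}1&0\\0&-1\end{pmatrix}$, $Y=\begin{pmatrix}0&0\\1&0\end{pmatrix}$, acting on the irreducible modules $S^d(\mathbb{C}^2)$. Let $x_0\in S^r(\mathbb{C}^2)$ be a highest weight vector and $x_i=Y^ix_0/i!$ ($0\le i\le r$), so $Yx_i=(i+1)x_{i+1}$, $Xx_i=(r-i+1)x_{i-1}$, $Hx_i=(r-2i)x_i$. Let $w_0\in S^n(\mathbb{C}^2)$ be a highest weight vector and $w_k=Y^kw_0/k!$ ($0\le k\le n$). Writing $f=\sum_{k=0}^n q_kw_k$ means $f(u)=\sum_k q_k(u)w_k$ for linear forms $q_k$ on $S^2(S^r(\mathbb{C}^2))$;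 $q_k(x_ix_j)$ is the value on the product $x_ix_j$. *)

(* Defs.v *)
From HB Require Import structures.
From mathcomp Require Import all_boot all_order all_algebra all_field.
Set Implicit Arguments. Unset Strict Implicit. Unset Printing Implicit Defensive.
Import Order.TTheory GRing.Theory Num.Theory.
Local Open Scope ring_scope.

(* The irreducible sl_2(C)-module S^d(C^2) is modelled as column vectors
   'cV[algC]_(d.+1), with basis vector number l (0 <= l <= d) = delta_mx l 0
   (the vector x_l = Y^l x_0 / l!).  The matrices below give the action of
   X, H, Y in this basis:
     Y x_l = (l+1) x_(l+1),  X x_l = (d-l+1) x_(l-1),  H x_l = (d-2l) x_l. *)
Definition sl2Y (d : nat) : 'M[algC]_(d.+1) :=
  \matrix_(a, b) (if (a : nat) == b.+1 then (b.+1)%:R else 0).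
Definition sl2X (d : nat) : 'M[algC]_(d.+1) :=
  \matrix_(a, b) (if (a.+1 == b :> nat) then ((d - b).+1)%:R else 0).
Definition sl2H (d : nat) : 'M[algC]_(d.+1) :=
  \matrix_(a, b) (if a == b then d%:R - 2 * (b : nat)%:R else 0).

(* basis vector x_l of S^d(C^2), with the convention x_l = 0 for l outside [0,d] *)
Definition bvec (d : nat) (l : int) : 'cV[algC]_(d.+1) :=
  match l with
  | Posz l' => if (l' <= d)%N then delta_mx (inord l') 0 else 0
  | Negz _ => 0
  end.

(* A linear map f : S^2(V) -> W is the same thing as a symmetric bilinear map
   B : V -> V -> W, via f(u v) = B u v. *)
Definition sym_bilinear (p q : nat)
    (B : 'cV[algC]_p -> 'cV[algC]_p -> 'cV[algC]_q) : Prop :=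
  (forall u a v w, B u (a *: v + w) = a *: B u v + B u w) /\
  (forall u v, B u v = B v u).

(* sl_2-equivariance of f : S^2(S^r C^2) -> S^n C^2, where Z(u v) = (Zu) v + u (Zv). *)
Definition sl2_equivariant (r n : nat)
    (B : 'cV[algC]_(r.+1) -> 'cV[algC]_(r.+1) -> 'cV[algC]_(n.+1)) : Prop :=
  (forall u v, B (sl2X r *m u) v + B u (sl2X r *m v) = sl2X n *m B u v) /\
  (forall u v, B (sl2H r *m u) v + B u (sl2H r *m v) = sl2H n *m B u v) /\
  (forall u v, B (sl2Y r *m u) v + B u (sl2Y r *m v) = sl2Y n *m B u v).

(* q_k(x_i x_j) : coefficient of w_k in f(x_i x_j) *)
Definition qcoef (r n : nat)
    (B : 'cV[algC]_(r.+1) -> 'cV[algC]_(r.+1) -> 'cV[algC]_(n.+1))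
    (k : nat) (i j : int) : algC :=
  B (bvec r i) (bvec r j) (inord k) 0.

Definition binomZ (a b : int) : algC :=
  match a, b with
  | Posz a', Posz b' => ('C(a', b'))%:R
  | _, _ => 0
  end.

(* Main.v *)
Require Import Defs.
From HB Require Import structures.
From mathcomp Require Import all_boot all_order all_algebra all_field.
From mathcomp Require Import zify ring.
Import Order.TTheory GRing.Theory Num.Theory.
Local Open Scope ring_scope.

Lemma bvec_out d l : (d < l)%N -> bvec d (Posz l) = 0.
Proof. by move=> h; rewrite /bvec leqNgt h. Qed.

Lemma Y_bvec d i : (i <= d)%N ->
  sl2Y d *m bvec d (Posz i) = (i.+1)%:R *: bvec d (Posz i.+1).
Proof.
move=> hi; rewrite /bvec hi -colE; apply/matrixP => a b.
rewrite !mxE ord1 inordK ?ltnS //.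
case: (leqP i.+1 d) => h.
  rewrite !mxE /= eqxx andbT.
  have -> : (a == inord i.+1) = (a == i.+1 :> nat) by rewrite -val_eqE /= inordK.
  by case: eqP => _; rewrite ?mulr1 ?mulr0.
rewrite !mxE mulr0; case: eqP => // ha; have := ltn_ord a; lia.
Qed.

Lemma X_bvec d i : (i.+1 <= d)%N ->
  sl2X d *m bvec d (Posz i.+1) = (d - i)%:R *: bvec d (Posz i).
Proof.
move=> hi; rewrite /bvec hi ltnW // -colE; apply/matrixP => a b.
rewrite !mxE ord1 inordK ?ltnS // eqxx andbT eqSS.
have -> : (a == inord i) = (a == i :> nat) by rewrite -val_eqE /= inordK // ltnS ltnW.
case: eqP => _; rewrite ?mulr1 ?mulr0 //; congr (_%:R); lia.
Qed.

Lemma X_bvec0 d : sl2X d *m bvec d 0 = 0.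
Proof.
rewrite /bvec /= -colE; apply/matrixP => a b; rewrite !mxE inordK //.
Qed.

Lemma Xcomp n (v : 'cV[algC]_(n.+1)) k : (k < n)%N ->
  (sl2X n *m v) (inord k) 0 = (n - k)%:R * v (inord k.+1) 0.
Proof.
move=> hk; rewrite mxE (bigD1 (inord k.+1)) //= big1 ?addr0.
  by rewrite !mxE !inordK ?eqxx //; try lia; congr (_%:R * _); lia.
move=> c hc; rewrite !mxE inordK; last lia.
case: eqP => [e|]; last by rewrite mul0r.
case/eqP: hc; apply: val_inj; rewrite /= inordK //; lia.
Qed.

Lemma Ycomp0 n (v : 'cV[algC]_(n.+1)) : (sl2Y n *m v) (inord 0) 0 = 0.
Proof.
by rewrite mxE big1 // => c _; rewrite !mxE inordK // mul0r.
Qed.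

Definition SS (r m b e : nat) : algC :=
  \sum_(0 <= s < (2 * m).+1)
    ((-1)^+s * ('C(2 * m,s))%:R * ('C(r-s,b))%:R * ('C(r-2 * m+s,e))%:R).

Lemma nat_id a b A e K : (b <= a -> e <= A -> a - b + (A - e) = K)%N ->
  (K * ('C(a,b) * 'C(A,e)) =
   b.+1 * 'C(a,b.+1) * 'C(A,e) + e.+1 * ('C(a,b) * 'C(A,e.+1)))%N.
Proof.
move=> hK; rewrite [(e.+1 * _)%N]mulnCA !mul_bin_left.
case: (leqP b a) => Hb; last first.
  by rewrite (bin_small Hb) ?muln0 ?mul0n ?addn0 ?muln0.
case: (leqP e A) => He; last first.
  by rewrite (bin_small He) ?muln0 ?mul0n ?addn0 ?muln0.
rewrite -(hK Hb He); nia.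
Qed.

Lemma SS_rec r m b e K : (2 * m <= r)%N -> (b + e + K = 2 * r - 2 * m)%N ->
  K%:R * SS r m b e = b.+1%:R * SS r m b.+1 e + e.+1%:R * SS r m b e.+1.
Proof.
move=> hm hK; rewrite /SS !mulr_sumr -big_split /=.
apply: eq_big_nat => s /andP[_ hs].
have h := @nat_id (r - s) b (r - 2 * m + s) e K.
have {}h := congr1 (fun x => x%:R : algC) (h ltac:(lia)).
rewrite /= !natrD !natrM in h.
transitivity ((-1 : algC)^+s * ('C(2 * m,s))%:R * (K%:R * (('C(r-s,b))%:R * ('C(r-2 * m+s,e))%:R))).
  ring.
rewrite h; ring.
Qed.

Lemma B0r p q (B : 'cV[algC]_p -> 'cV[algC]_p -> 'cV[algC]_q) u :
  sym_bilinear B -> B u 0 = 0.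
Proof.
move=> [lin _]; have h := lin u 1 0 0; rewrite scale1r addr0 scale1r in h.
by apply: (addIr (B u 0)); rewrite add0r -h.
Qed.

Lemma BZr p q (B : 'cV[algC]_p -> 'cV[algC]_p -> 'cV[algC]_q) u a v :
  sym_bilinear B -> B u (a *: v) = a *: B u v.
Proof.
move=> hB; have := hB.1 u a v 0; rewrite addr0 => ->.
by rewrite B0r // addr0.
Qed.

Lemma B0l p q (B : 'cV[algC]_p -> 'cV[algC]_p -> 'cV[algC]_q) u :
  sym_bilinear B -> B 0 u = 0.
Proof. by move=> hB; rewrite hB.2 B0r. Qed.

Lemma BZl p q (B : 'cV[algC]_p -> 'cV[algC]_p -> 'cV[algC]_q) u a v :
  sym_bilinear B -> B (a *: v) u = a *: B v u.
Proof. by move=> hB; rewrite hB.2 BZr // hB.2. Qed.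

Definition cc r n (B : 'cV[algC]_(r.+1) -> 'cV[algC]_(r.+1) -> 'cV[algC]_(n.+1))
  k i j := B (bvec r (Posz i)) (bvec r (Posz j)) (inord k) 0.
Arguments cc {r n}.

Lemma SS_bout r m e : (2 * m <= r)%N -> SS r m r.+1 e = 0.
Proof.
move=> hm; rewrite /SS big1_seq // => s /andP[_]; rewrite mem_iota => hs.
by rewrite (@bin_small (r - s)) ?mulr0 ?mul0r //; lia.
Qed.

Lemma SS_eout r m b : (2 * m <= r)%N -> SS r m b r.+1 = 0.
Proof.
move=> hm; rewrite /SS big1_seq // => s /andP[_]; rewrite mem_iota => hs.
by rewrite (@bin_small _ r.+1) ?mulr0 ?mul0r //; lia.
Qed.

Lemma SS_base r m i : (2 * m <= r)%N -> (i <= 2 * m)%N ->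
  SS r m (r - i) (r - (2 * m - i)) = (-1)^+i * ('C(2 * m, i))%:R.
Proof.
move=> hm hi; rewrite /SS big_mkord (bigD1 (Ordinal (hi : (i < (2 * m).+1)%N))) //=.
rewrite big1 ?addr0.
  have -> : (r - (2 * m - i) = r - 2 * m + i)%N by lia.
  by rewrite !binn !mulr1.
move=> s hs; have hs' : (s : nat) != i.
  by apply: contra hs => /eqP e; apply/eqP; apply: val_inj.
case: (ltnP s i) => h.
  by rewrite (@bin_small (r - 2 * m + s)) ?mulr0 //; lia.
have h2 : (i < s)%N by rewrite ltn_neqAle eq_sym hs' h.
have h3 := ltn_ord s.
by rewrite (@bin_small (r - s)) ?mulr0 ?mul0r //; lia.
Qed.

Lemma natr_neq0 k : (k.+1)%:R != 0 :> algC.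
Proof. by rewrite pnatr_eq0. Qed.

Lemma base0 r n m (B : 'cV[algC]_(r.+1) -> 'cV[algC]_(r.+1) -> 'cV[algC]_(n.+1)) :
  sym_bilinear B -> sl2_equivariant B -> (2 * m <= r)%N ->
  forall i, (i <= 2 * m)%N ->
  cc B 0 i (2 * m - i) = cc B 0 0 (2 * m) * ((-1)^+i * ('C(2 * m, i))%:R).
Proof.
move=> hB heq hm; elim=> [|i IH] hi.
  by rewrite subn0 expr0 bin0 mul1r mulr1.
have E := congr1 (fun M : 'cV[algC]_(n.+1) => M (inord 0) 0) (heq.2.2 (bvec r (Posz i)) (bvec r (Posz (2 * m - i.+1)))).
cbv beta in E.
rewrite Ycomp0 mxE Y_bvec ?Y_bvec ?BZl ?BZr // ?mxE in E; try lia.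
have e1 : (2 * m - i.+1).+1 = (2 * m - i)%N by lia.
rewrite e1 in E.
have IH' := IH (ltnW hi).
rewrite /cc in IH' *.
apply: (mulfI (natr_neq0 i)).
have -> : (i.+1)%:R * B (bvec r (Posz i.+1)) (bvec r (Posz (2 * m - i.+1))) (inord 0) 0
   = - ((2 * m - i.+1).+1)%:R * B (bvec r (Posz i)) (bvec r (Posz (2 * m - i))) (inord 0) 0.
  by apply/eqP; rewrite e1 mulNr -subr_eq0 opprK E.
rewrite IH'.
have h := mul_bin_left (2 * m) i.
have {}h := congr1 (fun x => x%:R : algC) h; rewrite /= !natrM in h.
have -> : (2 * m - i.+1).+1 = (2 * m - i)%N by lia.
rewrite exprS.
transitivity (- (B (bvec r 0) (bvec r (Posz (2 * m))) (inord 0) 0 * (-1) ^+ i * ((2 * m - i)%:R * ('C(2 * m, i))%:R))).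
  ring.
rewrite -h; ring.
Qed.

Lemma mainclaim r n m (B : 'cV[algC]_(r.+1) -> 'cV[algC]_(r.+1) -> 'cV[algC]_(n.+1)) :
  sym_bilinear B -> sl2_equivariant B -> (2 * m <= r)%N -> n = (2 * r - 4 * m)%N ->
  forall k, (k <= n)%N -> forall i j, (i <= r)%N -> (j <= r)%N -> (i + j = 2 * m + k)%N ->
  ('C(n, k))%:R * cc B k i j = cc B 0 0 (2 * m) * SS r m (r - i) (r - j).
Proof.
move=> hB heq hm hn; elim=> [|k IH] hk i j hi hj hij.
  have -> : j = (2 * m - i)%N by lia.
  rewrite bin0 mul1r base0 // ?SS_base //; lia.
have E := congr1 (fun M : 'cV[algC]_(n.+1) => M (inord k) 0) (heq.1 (bvec r (Posz i)) (bvec r (Posz j))).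
cbv beta in E.
rewrite mxE Xcomp in E; last lia.
have T1 : ('C(n, k))%:R * (B (sl2X r *m bvec r (Posz i)) (bvec r (Posz j))) (inord k) 0
    = cc B 0 0 (2 * m) * ((r - i).+1%:R * SS r m (r - i).+1 (r - j)).
  case: i hi hij {E} => [|i'] hi hij.
    by rewrite X_bvec0 B0l // mxE subn0 SS_bout // !mulr0.
  rewrite X_bvec // BZl // mxE mulrCA IH; try lia.
  have -> : (r - i'.+1).+1 = (r - i')%N by lia.
  ring.
have T2 : ('C(n, k))%:R * (B (bvec r (Posz i)) (sl2X r *m bvec r (Posz j))) (inord k) 0
    = cc B 0 0 (2 * m) * ((r - j).+1%:R * SS r m (r - i) (r - j).+1).
  case: j hj hij T1 {E} => [|j'] hj hij T1.
    by rewrite X_bvec0 B0r // mxE subn0 SS_eout // !mulr0.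
  rewrite X_bvec // BZr // mxE mulrCA IH; try lia.
  have -> : (r - j'.+1).+1 = (r - j')%N by lia.
  ring.
apply: (mulfI (natr_neq0 k)).
have h := congr1 (fun x => x%:R : algC) (mul_bin_left n k); rewrite /= !natrM in h.
rewrite mulrA h [(n - k)%:R * _]mulrC -mulrA /cc -E mulrDr T1 T2 [k.+1%:R * _]mulrCA (@SS_rec r m (r - i) (r - j) k.+1) //; last lia.
by rewrite mulrDr.
Qed.

Lemma bvec_neg d (l : int) : l < 0 -> bvec d l = 0.
Proof. by case: l => // l; rewrite ltz_nat. Qed.

Lemma binomZ_neg (a b : int) : b < 0 -> binomZ a b = 0.
Proof. by case: a => [a|a]; case: b => // b; rewrite ltz_nat. Qed.

Theorem mainTheorem3 (r m n : nat)
  (B : 'cV[algC]_(r.+1) -> 'cV[algC]_(r.+1) -> 'cV[algC]_(n.+1))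
  (hr : (2 <= r)%N) (hm : (2 * m <= r)%N) (hn : n = (2 * r - 4 * m)%N)
  (hB : sym_bilinear B) (heq : sl2_equivariant B) :
  let lambda := qcoef B 0 0%:Z (2 * m)%:Z in
  forall (k i : nat), (k <= n./2)%N -> (i <= r)%N ->
  let j : int := (2 * m + k)%:Z - i%:Z in
  ('C(n, k))%:R * qcoef B k i%:Z j =
  lambda * \sum_((i - k)%N <= s < (minn (2 * m) i).+1)
     ((-1) ^+ s * ('C(2 * m, s))%:R * ('C(r - s, r - i))%:R
       * binomZ (r - 2 * m + s)%:Z (r%:Z - j)).
Proof.
move=> lambda k i hk hi j.
have hkn : (k <= n)%N by lia.
case: (ltnP (2 * m + k) i) => hki.
  have hj : j < 0 by rewrite /j subr_lt0 ltz_nat.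
  rewrite /qcoef (@bvec_neg r _ hj) B0r // mxE mulr0 big_geq ?mulr0 //; lia.
have ej : j = Posz (2 * m + k - i) by rewrite /j subzn.
rewrite ej; set jn := (2 * m + k - i)%N.
case: (ltnP r jn) => hjr.
  rewrite /qcoef (@bvec_out r jn hjr) B0r // mxE mulr0 big1 ?mulr0 // => s _.
  rewrite binomZ_neg ?mulr0 //; rewrite subr_lt0 ltz_nat //.
have := @mainclaim r n m B hB heq hm hn k hkn i jn hi hjr ltac:(lia).
rewrite /cc => ->; rewrite /lambda /qcoef; congr (_ * _).
rewrite subzn //= /SS.
rewrite (@big_cat_nat _ _ _ (i - k)) //=; last lia.
rewrite (@big_cat_nat _ _ _ (minn (2 * m) i).+1 (i - k)) //=; try lia.
rewrite big1_seq ?add0r; last first.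
  move=> s /andP[_]; rewrite mem_iota => hs.
  by rewrite (@bin_small (r - 2 * m + s)) ?mulr0 //; lia.
rewrite [X in _ + X]big1_seq ?addr0; last first.
  move=> s /andP[_]; rewrite mem_iota => hs.
  by rewrite (@bin_small (r - s)) ?mulr0 ?mul0r //; lia.
by [].
Qed.
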